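(* Let $\Omega=(\omega_1,\dots,\omega_N)\in\mathbb{R}^N\setminus\{0\}$ and $\|\Omega\|_\infty=\max_i|\omega_i|$. Let $u_*\in[\|\Omega\|_\infty,\frac2{\sqrt3}\|\Omega\|_\infty]$ be the solution of \[ N+2\sum_{j=1}^N\sqrt{1-\frac{\omega_j^2}{u_*^2}}=\sum_{j=1}^N\frac{1}{\sqrt{1-\frac{\omega_j^2}{u_*^2}}}, \] and set $\kappa_c(\Omega)=\dfrac{Nu_*}{N+\sum_{j=1}^N\sqrt{1-\omega_j^2/u_*^2}}$. Then for $\kappa>0$, the system $\dot\theta_i=\omega_i-\frac{\kappa}{N}\sum_{j=1}^N(1+\cos\theta_j)\sin\theta_i$ admits an equilibrium if and only if $\kappa\ge\kappa_c(\Omega)$; in particular $\kappa_c(\Omega)=\inf\{\kappa_*>0:\text{for all }\kappa>\kappa_*\text{ the system admits an equilibrium}\}$. Moreover \[ \frac{2N\|\Omega\|_\infty}{4N-1}\le\frac{16N\|\Omega\|_\infty}{(6N-3+\sqrt{4N^2-4N+9})\sqrt{5-2N+\sqrt{4N^2-4N+9}}\sqrt{3+2N-\sqrt{4N^2-4N+9}}}\le\kappa_c(\Omega)\le\frac{4}{3\sqrt3}\|\Omega\|_\infty, \] with equality in the second inequality when $\omega_i=0$ for all but at most one $i$, and equality in the third when $|\omega_i|=\|\Omega\|_\infty$ for all $i$.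
   Context: An equilibrium is $\Theta\in\mathbb{R}^N$ at which all right-hand sides vanish. *)

(* Defs.v *)
From HB Require Import structures.
From mathcomp Require Import all_boot all_order all_algebra.
From mathcomp Require Import all_classical all_reals all_analysis.
Set Implicit Arguments. Unset Strict Implicit. Unset Printing Implicit Defensive.
Import Order.TTheory GRing.Theory Num.Theory.
Local Open Scope ring_scope.

Definition normInf (R : realType) (N : nat) (Om : 'I_N -> R) : R :=
  \big[Num.max/0]_(i < N) `|Om i|.

Definition sqf (R : realType) (u w : R) : R := Num.sqrt (1 - w ^+ 2 / u ^+ 2).

Definition ustar_eq (R : realType) (N : nat) (Om : 'I_N -> R) (u : R) : Prop :=
  N%:R + 2 * \sum_(j < N) sqf u (Om j) = \sum_(j < N) 1 / sqf u (Om j).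

Definition kappa_c (R : realType) (N : nat) (Om : 'I_N -> R) (u : R) : R :=
  N%:R * u / (N%:R + \sum_(j < N) sqf u (Om j)).

Definition rhs (R : realType) (N : nat) (Om : 'I_N -> R) (k : R)
  (th : 'I_N -> R) (i : 'I_N) : R :=
  Om i - k / N%:R * \sum_(j < N) (1 + cos (th j)) * sin (th i).

Definition has_equilibrium (R : realType) (N : nat) (Om : 'I_N -> R) (k : R) : Prop :=
  exists th : 'I_N -> R, forall i, rhs Om k th i = 0.

Definition lower_bound (R : realType) (N : nat) (M : R) : R :=
  let s := Num.sqrt (4 * N%:R ^+ 2 - 4 * N%:R + 9) in
  16 * N%:R * M /
  ((6 * N%:R - 3 + s) * Num.sqrt (5 - 2 * N%:R + s) * Num.sqrt (3 + 2 * N%:R - s)).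

(* Main.v *)
Require Import Defs.
From HB Require Import structures.
From mathcomp Require Import all_boot all_order all_algebra.
From mathcomp Require Import all_classical all_reals all_analysis.
From mathcomp Require Import ring lra.
Import Order.TTheory GRing.Theory Num.Theory.
Import numFieldNormedType.Exports.
Local Open Scope ring_scope.
Local Open Scope classical_set_scope.
Set Implicit Arguments. Unset Strict Implicit.

Lemma key_ineq (R : realFieldType) (a t t0 c c0 : R) :
  0 <= a -> 0 <= t -> 0 <= t0 -> 0 <= c -> 0 <= c0 ->
  c ^+ 2 = 1 - a * t ^+ 2 -> c0 ^+ 2 = 1 - a * t0 ^+ 2 ->
  t * c * c0 <= t * (1 - 2 * a * t0 ^+ 2) + a * t0 ^+ 3.
Proof.
move=> ha ht ht0 hc hc0 e1 e2.
have h1 : 0 <= t * (c - c0) ^+ 2 by rewrite mulr_ge0 // sqr_ge0.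
have h2 : 0 <= a * ((t - t0) ^+ 2 * (t + 2 * t0)).
  by rewrite mulr_ge0 // mulr_ge0 ?sqr_ge0 // addr_ge0 // mulr_ge0.
nra.
Qed.

Lemma sqf_cont (R : realType) (w x : R) : 0 < x -> {for x, continuous (fun r => sqf r w)}.
Proof.
move=> x0; rewrite /sqf.
have hin : (fun r => 1 - w ^+ 2 / r ^+ 2) @ x --> (1 - w ^+ 2 / x ^+ 2).
2: have hs := @sqrt_continuous R (1 - w ^+ 2 / x ^+ 2); exact: (cvg_comp _ _ hin hs).
apply: cvgB; first exact: cvg_cst.
apply: cvgMl_tmp.
apply: cvgV; first by rewrite expf_neq0 // gt_eqF.
exact: exprn_continuous.
Qed.

Lemma phi_cont (R : realType) (N : nat) (Om : 'I_N -> R) (k u b : R) : 0 < u ->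
  {within `[u, b], continuous (fun r => N%:R * r - k * (N%:R + \sum_(j < N) sqf r (Om j)))}.
Proof.
move=> u0; apply: continuous_in_subspaceT => x; rewrite inE /= in_itv /= => /andP[ux _].
have x0 : 0 < x by apply: lt_le_trans ux.
apply: cvgB; first by apply: cvgMl_tmp; exact: cvg_id.
apply: cvgMl_tmp.
apply: cvgD; first exact: cvg_cst.
apply: cvg_big => //; first exact: add_continuous.
by move=> i _; apply: sqf_cont.
Qed.

Lemma sq_le (R : realType) (w r : R) : `|w| <= r -> w ^+ 2 <= r ^+ 2.
Proof. by move=> /[dup] h; rewrite ler_norml => /andP[h1 h2]; nra. Qed.

Lemma sqf_prop (R : realType) (r w : R) : 0 < r -> `|w| <= r ->
  [/\ 0 <= sqf r w, sqf r w <= 1 & sqf r w ^+ 2 = 1 - w ^+ 2 / r ^+ 2].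
Proof.
move=> r0 hw.
have hq : w ^+ 2 / r ^+ 2 <= 1.
  by rewrite ler_pdivrMr ?exprn_gt0 // mul1r sq_le.
have hq0 : 0 <= w ^+ 2 / r ^+ 2 by rewrite divr_ge0 // ?sqr_ge0.
have e : sqf r w ^+ 2 = 1 - w ^+ 2 / r ^+ 2 by rewrite sqr_sqrtr // subr_ge0.
have g : 0 <= sqf r w by apply: sqrtr_ge0.
split => //; nra.
Qed.

Lemma sqf_pos (R : realType) (r w : R) : 0 < r -> `|w| < r -> 0 < sqf r w.
Proof.
move=> r0 hw; rewrite /sqf sqrtr_gt0 subr_gt0 ltr_pdivrMr ?exprn_gt0 // mul1r.
move: hw; rewrite ltr_norml => /andP[h1 h2]; nra.
Qed.

Lemma div_le (R : realFieldType) (a b c d : R) : 0 < b -> 0 < d ->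
  a * d <= c * b -> a / b <= c / d.
Proof. by move=> b0 d0 h; rewrite ler_pdivrMr // mulrAC ler_pdivlMr. Qed.

Lemma div_le' (R : realFieldType) (a b c d : R) : 0 < b -> 0 < d ->
  a / b <= c / d -> a * d <= c * b.
Proof. by move=> b0 d0; rewrite ler_pdivrMr // mulrAC ler_pdivlMr. Qed.

Lemma concave_G (R : realType) (N : nat) (Om : 'I_N -> R) (u r : R) :
  0 < u -> (forall j, `|Om j| < u) -> ustar_eq Om u ->
  0 < r -> (forall j, `|Om j| <= r) ->
  (N%:R + \sum_(j < N) sqf r (Om j)) / r <= (N%:R + \sum_(j < N) sqf u (Om j)) / u.
Proof.
move=> u0 hu hE r0 hr.
set t := r^-1; set t0 := u^-1.
have t0p : 0 < t0 by rewrite invr_gt0.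
have tp : 0 < t by rewrite invr_gt0.
have per : forall j, t * sqf r (Om j) <=
    t0 * sqf u (Om j) + (t - t0) * (2 * sqf u (Om j) - (sqf u (Om j))^-1).
  move=> j.
  have [c0 c1 c2] := sqf_prop r0 (hr j).
  have [d0 d1 d2] := sqf_prop u0 (ltW (hu j)).
  have dp := sqf_pos u0 (hu j).
  set c := sqf r (Om j) in c0 c1 c2 *; set d := sqf u (Om j) in d0 d1 d2 dp *.
  have e1 : c ^+ 2 = 1 - Om j ^+ 2 * t ^+ 2 by rewrite c2 /t exprVn.
  have e2 : d ^+ 2 = 1 - Om j ^+ 2 * t0 ^+ 2 by rewrite d2 /t0 exprVn.
  have K := key_ineq (sqr_ge0 (Om j)) (ltW tp) (ltW t0p) c0 d0 e1 e2.
  have E : (t0 * d + (t - t0) * (2 * d - d^-1)) * d =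
           t * (1 - 2 * Om j ^+ 2 * t0 ^+ 2) + Om j ^+ 2 * t0 ^+ 3.
    have dn : d != 0 by rewrite gt_eqF.
    rewrite mulrDl mulrBr mulrBl divfK //.
    have -> : t0 * d * d = t0 * d ^+ 2 by ring.
    have -> : (t - t0) * (2 * d) * d = (t - t0) * 2 * d ^+ 2 by ring.
    rewrite e2; ring.
  by rewrite -(ler_pM2r dp) E.
have hs : \sum_(j < N) t * sqf r (Om j) <= \sum_(j < N)
    (t0 * sqf u (Om j) + (t - t0) * (2 * sqf u (Om j) - (sqf u (Om j))^-1)).
  by apply: ler_sum => j _; exact: per.
rewrite big_split /= -!mulr_sumr sumrB -mulr_sumr in hs.
have hE' : N%:R + 2 * \sum_(j < N) sqf u (Om j) = \sum_(j < N) (sqf u (Om j))^-1.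
  by rewrite hE; apply: eq_bigr => j _; rewrite div1r.
rewrite -hE' in hs.
rewrite /t /t0 in hs *.
set A := \sum_(j < N) sqf r (Om j) in hs *.
set B := \sum_(j < N) sqf u (Om j) in hs *.
have : (N%:R + A) * r^-1 <= (N%:R + B) * u^-1.
  have -> : (N%:R + B) * u^-1 = N%:R * r^-1 + (u^-1 * B - (r^-1 - u^-1) * N%:R).
    ring.
  rewrite mulrDl; apply: lerD => //.
  have -> : A / r = r^-1 * A by rewrite mulrC.
  apply: (le_trans hs); rewrite le_eqVlt; apply/orP; left; apply/eqP; ring.
by [].
Qed.

Unset Implicit Arguments.

Theorem proposition6p3 (R : realType) (N : nat) (Om : 'I_N -> R) (u : R) :
  (exists i, Om i != 0) ->
  normInf Om < u -> u <= 2 / Num.sqrt 3 * normInf Om ->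
  ustar_eq Om u ->
  (forall k : R, 0 < k -> (has_equilibrium Om k <-> kappa_c Om u <= k)) /\
  kappa_c Om u = inf [set ks : R | 0 < ks /\ forall k, ks < k -> has_equilibrium Om k] /\
  2 * N%:R * normInf Om / (4 * N%:R - 1) <= lower_bound N (normInf Om) /\
  lower_bound N (normInf Om) <= kappa_c Om u /\
  kappa_c Om u <= 4 / (3 * Num.sqrt 3) * normInf Om /\
  ((forall i j, i != j -> Om i = 0 \/ Om j = 0) ->
     lower_bound N (normInf Om) = kappa_c Om u) /\
  ((forall i, `|Om i| = normInf Om) ->
     kappa_c Om u = 4 / (3 * Num.sqrt 3) * normInf Om).
Proof.
move=> [i1 hi1] hMu huM hE.
have N0 : (0 < N)%N by apply: leq_ltn_trans (ltn_ord i1).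
have Nr : 0 < N%:R :> R by rewrite ltr0n.
have Mge : forall j, `|Om j| <= normInf Om.
  by move=> j; rewrite /normInf; apply: le_bigmax.
have [i0 hi0] : exists i0, normInf Om = `|Om i0|.
  have [i0 _ e] := eq_bigmax (x:=0) i1 predT (fun i => `|Om i|) (erefl (predT i1)) (fun i _ => normr_ge0 (Om i)).
  by exists i0.
set M := normInf Om in hMu huM Mge hi0 *.
have M0 : 0 < M by apply: lt_le_trans (Mge i1); rewrite normr_gt0.
have u0 : 0 < u by apply: lt_trans hMu.
have hlt : forall j, `|Om j| < u by move=> j; apply: le_lt_trans (Mge j) hMu.
set G := fun r => N%:R + \sum_(j < N) sqf r (Om j).
have conc : forall r, 0 < r -> (forall j, `|Om j| <= r) -> G r / r <= G u / u.
  by move=> r r0 hr; apply: concave_G.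
have Gu0 : 0 < G u.
  rewrite /G /=; apply: (lt_le_trans Nr); rewrite lerDl.
  by apply: sumr_ge0 => j _; apply: sqrtr_ge0.
have kcE : kappa_c Om u = N%:R * u / G u by [].
have Nn : N%:R != 0 :> R by rewrite gt_eqF.
have part1 : forall k, 0 < k -> (has_equilibrium Om k <-> N%:R * u / G u <= k).
  move=> k k0; split.
  - move=> [th hth].
    set S := \sum_(j < N) (1 + cos (th j)).
    have hOm : forall i, Om i = k / N%:R * S * sin (th i).
      move=> i; move/eqP: (hth i); rewrite /rhs -mulr_suml subr_eq0 => /eqP ->.
      by rewrite mulrA.
    set r := k / N%:R * S in hOm.
    have S0 : 0 <= S.
      by apply: sumr_ge0 => j _; have := cos_geN1 (th j); lra.
    have r0 : 0 < r.
      rewrite lt_def; apply/andP; split.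
        by apply/eqP => e; move: hi1; rewrite hOm e mul0r eqxx.
      by rewrite /r mulr_ge0 // divr_ge0 // ltW.
    have hr : forall j, `|Om j| <= r.
      move=> j; rewrite hOm normrM (gtr0_norm r0).
      have hs1 : `|sin (th j)| <= 1 by rewrite ler_norml sin_geN1 sin_le1.
      by have := ler_wpM2l (ltW r0) hs1; rewrite mulr1.
    have hsin : forall j, sin (th j) = Om j / r.
      by move=> j; rewrite hOm mulrAC divff ?mul1r // gt_eqF.
    have hcos : forall j, cos (th j) <= sqf r (Om j).
      move=> j; have [c0 c1 c2] := sqf_prop r0 (hr j).
      have e : cos (th j) ^+ 2 = sqf r (Om j) ^+ 2.
        by rewrite c2 cos2sin2 hsin expr_div_n.
      nra.
    have SG : S <= G r.
      rewrite /S /G /= big_split /= sumr_const card_ord -[1 *+ N]mulr_natr mul1r.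
      by rewrite lerD2l; apply: ler_sum => j _; exact: hcos.
    have Nr_eq : N%:R * r = k * S by rewrite /r; field.
    have C := conc r r0 hr.
    have Gr0 : 0 < G r.
      rewrite /G /=; apply: (lt_le_trans Nr); rewrite lerDl.
      by apply: sumr_ge0 => j _; apply: sqrtr_ge0.
    have C' := div_le' r0 u0 C.
    rewrite ler_pdivrMr //.
    have h1 : N%:R * r * u <= k * G r * u.
      by rewrite Nr_eq ler_pM2r // ler_pM2l.
    have h2 : k * G r * u <= k * (G u * r).
      by rewrite -mulrA ler_pM2l.
    have : N%:R * u * r <= k * G u * r.
      have e1 : N%:R * u * r = N%:R * r * u by rewrite mulrAC.
      have e2 : k * (G u * r) = k * G u * r by rewrite mulrA.
      by rewrite e1 -e2; apply: le_trans h1 h2.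
    by rewrite ler_pM2r.
  - rewrite ler_pdivrMr // => hk.
    set b := Num.max u (2 * k).
    have ub : u <= b by rewrite le_max lexx.
    have kb : 2 * k <= b by rewrite le_max lexx orbT.
    have b0 : 0 < b by apply: lt_le_trans ub.
    set phi := fun r => N%:R * r - k * (N%:R + \sum_(j < N) sqf r (Om j)).
    have phiu : phi u <= 0 by rewrite /phi subr_le0.
    have phib : 0 <= phi b.
      rewrite /phi subr_ge0.
      have hb : forall j, `|Om j| <= b by move=> j; apply: le_trans ub; apply: ltW.
      have sb : \sum_(j < N) sqf b (Om j) <= N%:R.
        have -> : N%:R = \sum_(j < N) (1 : R).
          by rewrite sumr_const card_ord.
        by apply: ler_sum => j _; have [] := sqf_prop b0 (hb j).
      have : k * (N%:R + \sum_(j < N) sqf b (Om j)) <= k * (2 * N%:R).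
        by rewrite ler_pM2l //; lra.
      move=> h; apply: (le_trans h).
      have : 2 * k * N%:R <= b * N%:R by rewrite ler_pM2r.
      lra.
    have pc : {within `[u, b], continuous phi} by exact: phi_cont.
    have mm : Num.min (phi u) (phi b) <= 0 <= Num.max (phi u) (phi b).
      apply/andP; split.
        by rewrite ge_min phiu.
      by rewrite le_max phib orbT.
    have [r hr phir] := @IVT R phi u b 0 ub pc mm.
    move: hr; rewrite in_itv /= => /andP[ur _].
    have r0 : 0 < r by apply: lt_le_trans ur.
    have hr : forall j, `|Om j| <= r by move=> j; apply: le_trans ur; apply: ltW.
    have hx : forall j, -1 <= Om j / r <= 1.
      move=> j; rewrite -ler_norml normrM normfV (gtr0_norm r0).
      by rewrite ler_pdivrMr // mul1r.
    exists (fun j => asin (Om j / r)) => i.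
    rewrite /rhs -mulr_suml.
    under eq_bigr do rewrite cos_asin ?hx // expr_div_n.
    rewrite asinK; last by rewrite in_itv /= hx.
    have -> : \sum_(i < N) (1 + Num.sqrt (1 - Om i ^+ 2 / r ^+ 2)) = G r.
      by rewrite /G /= big_split /= sumr_const card_ord.
    have e : k * G r = N%:R * r.
      by move: phir; rewrite /phi /G /= => /eqP; rewrite subr_eq0 => /eqP ->.
    rewrite mulrA.
    have -> : k / N%:R * G r = r.
      by rewrite mulrAC e mulrAC divff // mul1r.
    by rewrite mulrCA divff ?mulr1 ?subrr // gt_eqF.
set kc := N%:R * u / G u in part1.
have kc0 : 0 < kc by rewrite /kc divr_gt0 // mulr_gt0.
have partinf : kc = inf [set ks : R | 0 < ks /\ forall k, ks < k -> has_equilibrium Om k].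
  set E := [set ks : R | _].
  have memE : forall ks, E ks <-> kc <= ks.
    move=> ks; split.
    - move=> [ks0 h]; rewrite leNgt; apply/negP => hlt2.
      have kk : ks < (ks + kc) / 2 by lra.
      have := (part1 _ (lt_trans ks0 kk)).1 (h _ kk).
      lra.
    - move=> hk; split; first exact: lt_le_trans hk.
      move=> k hk'.
      have k0 : 0 < k by apply: lt_trans hk'; apply: lt_le_trans hk.
      by apply/(part1 k k0).2; apply: le_trans hk (ltW hk').
  have Ekc : E kc by apply/memE.
  have lb : lbound E kc by move=> y /memE.
  apply/le_anti/andP; split.
    by apply: lb_le_inf => //; exists kc.
  by apply: (ge_inf (ex_intro _ kc lb)).
have kcE' : kappa_c Om u = kc by [].
rewrite kcE'.
have N1 : 1 <= N%:R :> R by rewrite ler1n.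
set m : R := 2 * N%:R - 1.
have m1 : 1 <= m by rewrite /m; lra.
set s := Num.sqrt (m ^+ 2 + 8).
have s0 : 0 <= s by apply: sqrtr_ge0.
have s2 : s ^+ 2 = m ^+ 2 + 8 by rewrite sqr_sqrtr //; nra.
have sm : m < s by nra.
have sm4 : s < m + 4 by nra.
set p := Num.sqrt (4 + m - s).
set q := Num.sqrt (4 - m + s).
have p2 : p ^+ 2 = 4 + m - s by rewrite sqr_sqrtr //; lra.
have q2 : q ^+ 2 = 4 - m + s by rewrite sqr_sqrtr //; lra.
have p0 : 0 < p by rewrite sqrtr_gt0; lra.
have q0 : 0 < q by rewrite sqrtr_gt0; lra.
set xs := p * q / 4.
set ys := (s - m) / 4.
have xs0 : 0 < xs by rewrite /xs divr_gt0 // mulr_gt0.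
have ys0 : 0 < ys by rewrite /ys divr_gt0 //; lra.
have hys : m * ys + 2 * ys ^+ 2 = 1.
  have -> : m * ys + 2 * ys ^+ 2 = (s ^+ 2 - m ^+ 2 - 8) / 8 + 1 by rewrite /ys; field.
  by rewrite s2; field.
have hxs : xs ^+ 2 + ys ^+ 2 = 1.
  have -> : xs ^+ 2 = p ^+ 2 * q ^+ 2 / 16 by rewrite /xs; field.
  rewrite p2 q2 /ys.
  have -> : (4 + m - s) * (4 - m + s) / 16 + ((s - m) / 4) ^+ 2 = 1 + (s ^+ 2 - s ^+ 2) / 16 by field.
  by rewrite subrr mul0r addr0.
set V := xs * (m + ys).
have V0 : 0 < V by rewrite /V mulr_gt0 //; lra.
have lbE : lower_bound N M = N%:R * M / V.
  rewrite /lower_bound.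
  have e1 : 4 * N%:R ^+ 2 - 4 * N%:R + 9 = m ^+ 2 + 8 :> R by rewrite /m; ring.
  have e2 : 6 * N%:R - 3 = 3 * m :> R by rewrite /m; ring.
  have e3 : 5 - 2 * N%:R = 4 - m :> R by rewrite /m; ring.
  have e4 : 3 + 2 * N%:R = 4 + m :> R by rewrite /m; ring.
  rewrite e1 -/s e2 e3 e4 -/p.
  have -> : 4 - m + s = 4 - m + s by [].
  rewrite -/q.
  have -> : (3 * m + s) * q * p = 16 * V by rewrite /V /xs /ys; field.
  field; lra.
set y0 := sqf u (Om i0).
set x0 := M / u.
have x00 : 0 < x0 by rewrite /x0 divr_gt0.
have x01 : x0 < 1 by rewrite /x0 ltr_pdivrMr // mul1r.
have [y00 y01 y02] := sqf_prop u0 (ltW (hlt i0)).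
have hy0 : y0 ^+ 2 = 1 - x0 ^+ 2.
  by rewrite y02 /x0 expr_div_n hi0 real_normK // num_real.
have y0p : 0 < y0 by apply: sqf_pos.
set K := \sum_(j < N | j != i0) (1 : R).
have NK : N%:R = 1 + K.
  have : \sum_(j < N) (1 : R) = N%:R by rewrite sumr_const card_ord.
  by rewrite (bigD1 i0) //= => <-.
have GuE : G u = N%:R + y0 + \sum_(j < N | j != i0) sqf u (Om j).
  by rewrite /G /= (bigD1 i0) //= addrA.
have Gle : G u <= m + y0.
  rewrite GuE.
  have : \sum_(j < N | j != i0) sqf u (Om j) <= K.
    by apply: ler_sum => j _; have [] := sqf_prop u0 (ltW (hlt j)).
  rewrite /m NK; lra.
have xV : x0 * (m + y0) <= V.
  have e1 : y0 ^+ 2 = 1 - 1 * x0 ^+ 2 by rewrite mul1r.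
  have e2 : ys ^+ 2 = 1 - 1 * xs ^+ 2 by rewrite mul1r; lra.
  have Kq := key_ineq ler01 (ltW x00) (ltW xs0) (ltW y0p) (ltW ys0) e1 e2.
  have e3 : x0 * (1 - 2 * 1 * xs ^+ 2) + 1 * xs ^+ 3 = ys * (V - m * x0).
    rewrite /V.
    have -> : x0 * (1 - 2 * 1 * xs ^+ 2) + 1 * xs ^+ 3 = ys * (xs * (m + ys) - m * x0)
       + (xs - 2 * x0) * (xs ^+ 2 + ys ^+ 2 - 1) + (x0 - xs) * (m * ys + 2 * ys ^+ 2 - 1) by ring.
    by rewrite hxs hys !subrr !mulr0 !addr0.
  rewrite e3 in Kq.
  have : x0 * y0 <= V - m * x0.
    by rewrite -(ler_pM2l ys0); rewrite mulrC -mulrA [y0 * ys]mulrC mulrA; lra.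
  lra.
have part4 : N%:R * M / V <= kc.
  rewrite /kc; apply: div_le => //.
  have hM : M = u * x0 by rewrite /x0 mulrC divfK // gt_eqF.
  have h1 : M * G u <= M * (m + y0) by rewrite ler_pM2l.
  have h2 : M * (m + y0) <= u * V by rewrite hM -mulrA ler_pM2l.
  have h3 : M * G u <= u * V by apply: le_trans h1 h2.
  have := ler_pM2l Nr; move=> /(_ (M * G u) (u * V)); rewrite h3 => /esym h4.
  by move: h4; rewrite !mulrA.
have part3 : 2 * N%:R * M / (4 * N%:R - 1) <= N%:R * M / V.
  apply: div_le => //; first lra.
  have hxs1 : xs <= 1 by nra.
  have hxy : 2 * (xs * ys) <= 1 by nra.
  have hV : 2 * V <= 4 * N%:R - 1.
    rewrite /V /m; nra.
  have NM : 0 < N%:R * M by rewrite mulr_gt0.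
  have -> : 2 * N%:R * M * V = (N%:R * M) * (2 * V) by ring.
  by rewrite ler_pM2l.
set q3 := Num.sqrt (3 : R).
have q30 : 0 < q3 by rewrite sqrtr_gt0; lra.
have q32 : q3 ^+ 2 = 3 by rewrite sqr_sqrtr //; lra.
have part5 : kc <= 4 / (3 * q3) * M.
  set r := 2 * M / q3.
  have r0 : 0 < r by rewrite /r divr_gt0 // mulr_gt0.
  have Mr : M <= r.
    rewrite /r ler_pdivlMr //.
    have : q3 <= 2 by nra.
    nra.
  have hr : forall j, `|Om j| <= r by move=> j; apply: le_trans (Mge j) Mr.
  have r2 : r ^+ 2 = 4 * M ^+ 2 / 3 by rewrite /r expr_div_n q32; field.
  have hsq : forall j, 1 / 2 <= sqf r (Om j).
    move=> j; have [c0 c1 c2] := sqf_prop r0 (hr j).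
    have hO : Om j ^+ 2 <= M ^+ 2 by apply: sq_le.
    have : Om j ^+ 2 / r ^+ 2 <= 3 / 4.
      rewrite ler_pdivrMr ?exprn_gt0 // r2.
      have -> : 3 / 4 * (4 * M ^+ 2 / 3) = M ^+ 2 by field.
      exact: hO.
    nra.
  have Gr : 3 / 2 * N%:R <= G r.
    rewrite /G /=.
    have : \sum_(j < N) (1 / 2 : R) <= \sum_(j < N) sqf r (Om j).
      by apply: ler_sum => j _; apply: hsq.
    rewrite sumr_const card_ord -mulr_natr; lra.
  have C := div_le' r0 u0 (conc r r0 hr).
  have C2 : 3 / 2 * N%:R * u <= G r * u by rewrite ler_pM2r.
  rewrite /kc ler_pdivrMr //.
  have -> : 4 / (3 * q3) * M * G u = 2 / 3 * (G u * r).
    by rewrite /r; field; rewrite gt_eqF.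
  lra.
have part7 : (forall i, `|Om i| = M) -> kc = 4 / (3 * q3) * M.
  move=> hall.
  have sqE : forall j, sqf u (Om j) = y0.
    move=> j; rewrite /y0 /sqf.
    have e : Om j ^+ 2 = Om i0 ^+ 2.
      by rewrite -(real_normK (num_real (Om j))) -(real_normK (num_real (Om i0))) (hall j) hi0.
    by rewrite e.
  have S1 : \sum_(j < N) sqf u (Om j) = N%:R * y0.
    by under eq_bigr do rewrite sqE; rewrite sumr_const card_ord mulr_natl.
  have S2 : \sum_(j < N) 1 / sqf u (Om j) = N%:R / y0.
    have -> : \sum_(j < N) 1 / sqf u (Om j) = \sum_(j < N) (1 / y0).
      by apply: eq_bigr => j _; rewrite sqE.
    by rewrite sumr_const card_ord mulrnAl.
  move: hE; rewrite /ustar_eq S1 S2 => hE.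
  have hy : 1 + 2 * y0 = 1 / y0.
    apply: (mulfI Nn).
    have -> : N%:R * (1 + 2 * y0) = N%:R + 2 * (N%:R * y0) by ring.
    by rewrite hE div1r.
  have hy2 : y0 * (1 + 2 * y0) = 1 by rewrite hy mulrC divfK ?gt_eqF.
  have y12 : y0 = 1 / 2.
    have e : (2 * y0 - 1) * (y0 + 1) = y0 * (1 + 2 * y0) - 1 by ring.
    rewrite hy2 subrr in e.
    by move/eqP: e; rewrite mulf_eq0 => /orP[/eqP h|/eqP h]; lra.
  have hx2 : x0 ^+ 2 = 3 / 4.
    have -> : x0 ^+ 2 = 1 - y0 ^+ 2 by rewrite hy0; ring.
    by rewrite y12; field.
  have hxq : x0 = q3 / 2.
    apply/le_anti/andP; split; nra.
  have hM : M = u * x0 by rewrite /x0 mulrC divfK // gt_eqF.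
  rewrite /kc /G /= S1 hM hxq y12.
  by field; rewrite ?gt_eqF //; lra.
have part6 : (forall i j, i != j -> Om i = 0 \/ Om j = 0) -> N%:R * M / V = kc.
  move=> H.
  have Oi0 : Om i0 != 0 by rewrite -normr_gt0 -hi0.
  have Oz : forall j, j != i0 -> Om j = 0.
    move=> j hj; have hij : i0 != j by rewrite eq_sym.
    case: (H i0 j hij) => // e.
    by move: Oi0; rewrite e eqxx.
  have s1 : forall j, j != i0 -> sqf u (Om j) = 1.
    by move=> j hj; rewrite /sqf Oz // expr2 !mul0r subr0 sqrtr1.
  have SK : \sum_(j < N | j != i0) sqf u (Om j) = K.
    by apply: eq_bigr => j hj; rewrite s1.
  have SK' : \sum_(j < N | j != i0) 1 / sqf u (Om j) = K.
    by apply: eq_bigr => j hj; rewrite s1 // divr1.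
  have E1 : \sum_(j < N) sqf u (Om j) = y0 + K by rewrite (bigD1 i0) //= SK.
  have E2 : \sum_(j < N) 1 / sqf u (Om j) = 1 / y0 + K by rewrite (bigD1 i0) //= SK'.
  move: hE; rewrite /ustar_eq E1 E2 NK => hE.
  have hm : m + 2 * y0 = 1 / y0 by rewrite /m NK; lra.
  have hy : m * y0 + 2 * y0 ^+ 2 = 1.
    have -> : m * y0 + 2 * y0 ^+ 2 = y0 * (m + 2 * y0) by ring.
    by rewrite hm div1r mulfV // gt_eqF.
  have yy : y0 = ys.
    have e : (y0 - ys) * (m + 2 * y0 + 2 * ys) = (m * y0 + 2 * y0 ^+ 2) - (m * ys + 2 * ys ^+ 2) by ring.
    rewrite hy hys subrr in e.
    move/eqP: e; rewrite mulf_eq0 => /orP[/eqP h|/eqP h]; lra.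
  have xx : x0 = xs.
    have e : (x0 - xs) * (x0 + xs) = (1 - xs ^+ 2) - (1 - x0 ^+ 2) by ring.
    have e' : 1 - xs ^+ 2 = ys ^+ 2 by lra.
    rewrite e' -hy0 yy subrr in e.
    move/eqP: e; rewrite mulf_eq0 => /orP[/eqP h|/eqP h]; lra.
  have Gm : G u = m + y0 by rewrite GuE SK /m NK; ring.
  have hM : M = u * x0 by rewrite /x0 mulrC divfK // gt_eqF.
  rewrite /kc Gm /V -xx -yy hM.
  rewrite NK.
  by field; apply/andP; split; rewrite gt_eqF //; lra.
split; first exact: part1.
split; first exact: partinf.
split; first by rewrite lbE.
split; first by rewrite lbE.
split; first exact: part5.
split; first by move=> H; rewrite lbE; apply: part6.
exact: part7.
Qed.
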